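(* For all integers $n, k \geq 1$ with $n \geq k$, $$\sum_{i=k}^{n} \frac{S(n,i)\, s(i,k)}{i} = \frac{1}{n}\binom{n}{k} B_{n-k} + \delta_{n-1,k},$$ where $\delta$ denotes the Kronecker delta.
   Context: For $n \geq 0$, $X^{\underline{n}} := X(X-1)\cdots(X-n+1)$ ($X^{\underline{0}}=1$). The (signed) Stirling numbers of the first kind $s(n,k)$ are defined by $X^{\underline{n}} = \sum_{k=0}^{n} s(n,k) X^k$, and the Stirling numbers of the second kind $S(n,k)$ by $X^n = \sum_{k=0}^{n} S(n,k) X^{\underline{k}}$ (for all $n\ge 0$), with $s(n,k)=S(n,k)=0$ when $n<k$. The Bernoulli numbers $B_n$ are defined by $\frac{t}{e^t-1} = \sum_{n\ge 0} B_n \frac{t^n}{n!}$. *)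

(* Defs.v *)
From mathcomp Require Import all_boot all_order all_algebra.
Set Implicit Arguments. Unset Strict Implicit. Unset Printing Implicit Defensive.
Import GRing.Theory Num.Theory.
Local Open Scope ring_scope.

Definition falling_poly (n : nat) : {poly rat} :=
  \prod_(i < n) ('X - (i%:R)%:P).

Definition stirling1 (n k : nat) : rat := (falling_poly n)`_k.

Fixpoint stirling2 (n k : nat) : rat :=
  match n, k with
  | 0, 0 => 1
  | 0, _.+1 => 0
  | _.+1, 0 => 0
  | n'.+1, k'.+1 => k'.+1%:R * stirling2 n' k + stirling2 n' k'
  end.

(* Bernoulli numbers with t/(e^t-1) = sum B_n t^n/n!  (B_1 = -1/2):
   B_0 = 1 and for n >= 1, sum_{j=0}^{n} C(n+1,j) B_j = 0. *)
Fixpoint bernoulli_aux (n : nat) : seq rat :=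
  match n with
  | 0 => [:: 1]
  | n'.+1 =>
      let s := bernoulli_aux n' in
      rcons s (- (\sum_(j < n'.+1) ('C(n'.+2, j))%:R * nth 0 s j) / (n'.+2)%:R)
  end.

Definition bernoulli (n : nat) : rat := nth 0 (bernoulli_aux n) n.

(* Main.v *)
Require Import Defs.
From mathcomp Require Import all_boot all_order all_algebra.
From mathcomp Require Import zify ring.
Import GRing.Theory Num.Theory.
Local Open Scope ring_scope.

Lemma size_aux n : size (bernoulli_aux n) = n.+1.
Proof. by elim: n => //= n IH; rewrite size_rcons IH. Qed.

Lemma aux_prefix n j : (j <= n)%N -> nth 0 (bernoulli_aux n) j = bernoulli j.
Proof.
elim: n => [|n IH]; first by rewrite leqn0 => /eqP ->.
rewrite leq_eqVlt => /orP [/eqP -> //|Hj].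
by rewrite /= nth_rcons size_aux Hj IH.
Qed.

Lemma bern_sum r : (0 < r)%N ->
  \sum_(j < r) ('C(r, j))%:R * bernoulli j = (r == 1%N)%:R.
Proof.
case: r => // [[|r]] _.
  by rewrite big_ord_recl big_ord0 /bernoulli /= addr0 mulr1.
rewrite big_ord_recr /= binSn.
have -> : bernoulli r.+1 =
   - (\sum_(j < r.+1) ('C(r.+2, j))%:R * bernoulli j) / (r.+2)%:R.
  rewrite /bernoulli /= nth_rcons size_aux ltnn eqxx.
  congr (- _ / _); apply: eq_bigr => j _.
  by rewrite aux_prefix // -ltnS.
set S := \sum_(j < r.+1) _.
have h : (r.+2)%:R != 0 :> rat by rewrite pnatr_eq0.
by rewrite mulrC divfK // addrN.
Qed.

Lemma binC n j l : (j + l <= n)%N ->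
  ('C(n, j) * 'C(n - j, l) = 'C(n, l) * 'C(n - l, j))%N.
Proof.
move=> H.
have h1 := bin_fact (leq_trans (leq_addr l j) H).
have h2 : (l <= n - j)%N by lia.
have h2' := bin_fact h2.
have h3 := bin_fact (leq_trans (leq_addl j l) H).
have h4 : (j <= n - l)%N by lia.
have h4' := bin_fact h4.
apply/eqP; rewrite -(eqn_pmul2r (_ : 0 < j`! * l`! * (n-j-l)`!)%N); last first.
  by rewrite !muln_gt0 !fact_gt0.
have E1 : ('C(n, j) * 'C(n - j, l) * (j`! * l`! * (n-j-l)`!) = n`!)%N.
  by rewrite -h1 -h2'; ring.
have E2 : ('C(n, l) * 'C(n - l, j) * (j`! * l`! * (n-j-l)`!) = n`!)%N.
  by rewrite -h3 -h4' (subnAC n j l); ring.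
by rewrite E1 E2.
Qed.
Definition cB m j : rat := ('C(m.+1, j))%:R * bernoulli j / (m.+1)%:R.
Definition Phi m (x : rat) := \sum_(j < m.+1) cB m j * x ^+ (m.+1 - j).

Lemma Phi0 m : Phi m 0 = 0.
Proof.
by apply: big1 => j _; rewrite expr0n subn_eq0 leqNgt ltn_ord mulr0.
Qed.

Lemma Phi_diff m x : Phi m (x + 1) - Phi m x = x ^+ m.
Proof.
rewrite /Phi -sumrB.
transitivity (\sum_(j < m.+1) \sum_(l < m.+1)
   (if (l < m.+1 - j)%N then cB m j * ('C(m.+1 - j, l))%:R * x ^+ l else 0)).
  apply: eq_bigr => j _.
  rewrite -mulrBr exprD1n big_ord_recr /= binn mulr1n addrK.
  rewrite mulr_sumr (big_ord_widen m.+1 (fun i => cB m j * (x ^+ i *+ 'C(m.+1 - j, i))) (leq_subr j m.+1)).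
  rewrite big_mkcond; apply: eq_bigr => l _; case: ifP => // _.
  by rewrite -mulr_natr; ring.
rewrite exchange_big /=.
transitivity (\sum_(l < m.+1) (('C(m.+1, l))%:R / (m.+1)%:R * x ^+ l) *
    (\sum_(j < m.+1 - l) ('C(m.+1 - l, j))%:R * bernoulli j)).
  apply: eq_bigr => l _.
  rewrite mulr_sumr (big_ord_widen m.+1 (fun j => ('C(m.+1, l))%:R / (m.+1)%:R * x ^+ l * (('C(m.+1 - l, j))%:R * bernoulli j)) (leq_subr l m.+1)).
  rewrite [RHS]big_mkcond; apply: eq_bigr => j _.
  rewrite ltn_subRL addnC -ltn_subRL; case: ifP => // H.
  have Hjl : (j + l <= m.+1)%N by rewrite ltn_subRL in H; lia.
  have E : ('C(m.+1, j))%:R * ('C(m.+1 - j, l))%:R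
         = ('C(m.+1, l))%:R * ('C(m.+1 - l, j))%:R :> rat.
    by rewrite -!natrM binC.
  rewrite /cB.
  have -> : ('C(m.+1, j))%:R * bernoulli j / (m.+1)%:R * ('C(m.+1 - j, l))%:R * x ^+ l
     = (('C(m.+1, j))%:R * ('C(m.+1 - j, l))%:R) * (bernoulli j / (m.+1)%:R * x ^+ l) :> rat by ring.
  rewrite E; ring.
rewrite big_ord_recr /= big1 ?add0r.
  rewrite bern_sum ?subn_gt0 // subSnn eqxx mulr1 binSn.
  by rewrite mulfV ?mul1r // pnatr_eq0.
move=> l _.
rewrite bern_sum; last by rewrite subn_gt0 ltnS ltnW.
have -> : (m.+1 - widen_ord (leqnSn m) l == 1)%N = false.
  by apply/negbTE; rewrite /=; move: (ltn_ord l); lia.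
by rewrite mulr0.
Qed.
Definition pf (i : nat) (x : rat) : rat := \prod_(j < i) (x - j%:R).

Lemma pfS i x : pf i.+1 x = pf i x * (x - i%:R).
Proof. by rewrite /pf big_ord_recr. Qed.

Lemma pfS1 i x : pf i.+1 (x + 1) = (x + 1) * pf i x.
Proof.
rewrite /pf big_ord_recl subr0; congr (_ * _); apply: eq_bigr => j _.
by rewrite lift0 -addn1 natrD; ring.
Qed.

Lemma pf0 i : pf i.+1 0 = 0.
Proof. by rewrite /pf big_ord_recl subrr mul0r. Qed.

Lemma S2_gt m i : (m < i)%N -> stirling2 m i = 0.
Proof.
elim: m i => [|m IH] [|i] //= H.
by rewrite !IH ?mulr0 ?add0r //; apply: ltnW.
Qed.

Lemma S2S m i : stirling2 m.+1 i.+1 = i.+1%:R * stirling2 m i.+1 + stirling2 m i.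
Proof. by []. Qed.

Lemma S2_n0 m : stirling2 m.+1 0 = 0.
Proof. by []. Qed.

Lemma shift_sum (F : nat -> rat) n :
  \sum_(i < n) F i.+1 = \sum_(i < n) F i + F n - F 0%N.
Proof.
have h1 := @big_ord_recl rat 0 +%R n (fun i : 'I_n.+1 => F i).
have h2 := @big_ord_recr rat 0 +%R n (fun i : 'I_n.+1 => F i).
rewrite h1 /= in h2.
have -> : \sum_(i < n) F i.+1 = \sum_(i < n) F (lift ord0 i) by apply: eq_bigr => i _; rewrite lift0.
rewrite -h2 /=; ring.
Qed.

Lemma xpf s i x : x * (s * pf i x) = s * pf i.+1 x + i%:R * s * pf i x.
Proof. rewrite pfS; ring. Qed.

Lemma stir_sum m x : \sum_(i < m.+1) stirling2 m i * pf i x = x ^+ m.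
Proof.
elim: m => [|m IH]; first by rewrite big_ord_recl big_ord0 /pf big_ord0 addr0 mulr1.
rewrite big_ord_recl S2_n0 mul0r add0r exprS -IH mulr_sumr.
under eq_bigr do rewrite lift0 S2S mulrDl.
rewrite big_split /=.
under [in RHS]eq_bigr do rewrite xpf.
rewrite [in RHS]big_split /= addrC; congr (_ + _).
have := shift_sum (fun i => i%:R * stirling2 m i * pf i x) m.+1.
rewrite /= S2_gt // mulr0 mul0r addr0 !mul0r subr0 => ->.
by [].
Qed.

Definition G m x := \sum_(i < m.+1) stirling2 m i / (i.+1)%:R * pf i.+1 x.

Lemma G0 m : G m 0 = 0.
Proof. by apply: big1 => i _; rewrite pf0 mulr0. Qed.

Lemma G_diff m x : G m (x + 1) - G m x = x ^+ m.
Proof.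
rewrite /G -sumrB -(stir_sum m x); apply: eq_bigr => i _.
rewrite -mulrBr pfS1 pfS.
have h : (i.+1)%:R != 0 :> rat by rewrite pnatr_eq0.
have e : (i.+1)%:R = i%:R + 1 :> rat by rewrite -addn1 natrD.
rewrite -[in RHS](divfK h (stirling2 m i)) e; ring.
Qed.

Definition A m x := \sum_(i < m.+2) stirling2 m.+1 i / i%:R * pf i x.

Lemma A_eq m x : A m x = x ^+ m - stirling2 m 0 + G m x.
Proof.
rewrite /A big_ord_recl S2_n0 mul0r add0r.
under eq_bigr do rewrite lift0 S2S mulrDl mulrDl.
rewrite big_split /=; congr (_ + _).
  rewrite -(stir_sum m x).
  have := shift_sum (fun i => stirling2 m i * pf i x) m.+1.
  rewrite /= S2_gt // mul0r addr0 /pf big_ord0 mulr1 => <-.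
  apply: eq_bigr => i _.
  have h : (i.+1)%:R != 0 :> rat by rewrite pnatr_eq0.
  by rewrite [_ * stirling2 _ _]mulrC mulfK.
Qed.

Definition Pp m : {poly rat} :=
  \sum_(i < m.+2) (stirling2 m.+1 i / i%:R) *: falling_poly i.
Definition Qp m : {poly rat} :=
  'X^m - (stirling2 m 0)%:P + \sum_(j < m.+1) cB m j *: 'X^(m.+1 - j).

Lemma Pp_eval m x : (Pp m).[x] = A m x.
Proof.
rewrite /Pp horner_sum; apply: eq_bigr => i _.
by rewrite hornerZ /falling_poly horner_prod; congr (_ * _); apply: eq_bigr => j _; rewrite hornerXsubC.
Qed.

Lemma Qp_eval m x : (Qp m).[x] = x ^+ m - stirling2 m 0 + Phi m x.
Proof.
rewrite /Qp !hornerE horner_sum; congr (_ + _).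
by apply: eq_bigr => j _; rewrite hornerZ hornerXn.
Qed.

Lemma GPhi m N : G m N%:R = Phi m N%:R.
Proof.
elim: N => [|N IH]; first by rewrite G0 Phi0.
have e : N.+1%:R = N%:R + 1 :> rat by rewrite -addn1 natrD.
rewrite e -(subrK (G m N%:R) (G m (N%:R + 1))) G_diff IH.
by rewrite -(subrK (Phi m N%:R) (Phi m (N%:R + 1))) Phi_diff.
Qed.

Lemma poly_nat_eq0 (p : {poly rat}) : (forall N : nat, p.[N%:R] = 0) -> p = 0.
Proof.
move=> H; apply/eqP; apply: contraT => nz.
have := max_poly_roots nz (rs := map (fun N : nat => N%:R) (iota 0 (size p))).
rewrite size_map size_iota ltnn; apply.
  by apply/allP => y /mapP [N _ ->]; apply/rootP.
rewrite map_inj_uniq ?iota_uniq //.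
by move=> a b /eqP; rewrite eqr_nat => /eqP.
Qed.

Lemma PQ m : Pp m = Qp m.
Proof.
apply/eqP; rewrite -subr_eq0; apply/eqP; apply: poly_nat_eq0 => N.
by rewrite hornerD hornerN Pp_eval Qp_eval A_eq GPhi subrr.
Qed.

Theorem corollary4 (n k : nat) (hk : (1 <= k)%N) (hkn : (k <= n)%N) :
  \sum_(k <= i < n.+1) stirling2 n i * stirling1 i k / i%:R
  = ('C(n, k))%:R * bernoulli (n - k) / n%:R + (if n.-1 == k then 1 else 0).
Proof.
case: n hkn => [|m] hkn; first by move: hk; lia.
have L : \sum_(k <= i < m.+2) stirling2 m.+1 i * stirling1 i k / i%:R = (Pp m)`_k.
  rewrite /Pp coef_sum -(big_mkord xpredT (fun i => (stirling2 m.+1 i / i%:R *: falling_poly i)`_k)).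
  rewrite [RHS](@big_cat_nat _ _ _ k 0 m.+2) //; last by lia.
  rewrite [X in _ = X + _]big1_seq ?add0r; last first.
    move=> i; rewrite mem_index_iota => /andP [_ Hi].
    rewrite coefZ /stirling1 nth_default ?mulr0 //.
    by rewrite /falling_poly size_prod_XsubC /index_enum; unlock; rewrite -enumT size_enum_ord.
  by apply: eq_bigr => i _; rewrite coefZ /stirling1 mulrAC.
rewrite L PQ /Qp coefD coefB coefXn coefC.
have -> : (k == 0)%N = false by move: hk; lia.
rewrite subr0 coef_sum.
have Hj : (m.+1 - k < m.+1)%N by move: hk; lia.
rewrite (bigD1 (Ordinal Hj)) //= big1 ?addr0; last first.
  move=> j /eqP Hne; rewrite coefZ coefXn.
  have -> : (k == m.+1 - j)%N = false.
    apply/negbTE/eqP => E; apply: Hne; apply: val_inj => /=; move: (ltn_ord j); lia.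
  by rewrite mulr0.
rewrite coefZ coefXn subKn // eqxx mulr1 /cB bin_sub // addrC.
by rewrite eq_sym; case: (m == k)%N.
Qed.
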